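(* Let $m<M$ be real numbers and let $X$ be a random variable taking values in $[m,M]$, either discrete (taking finitely many values $x_1,\dots,x_n\in[m,M]$ with probabilities $p_1,\dots,p_n$) or continuous (with probability density $f$ on $[m,M]$). Let $\mu_1'$ be its mean and $\mu_2,\mu_3,\mu_4$ its second, third and fourth central moments, and assume $\mu_2\neq(\mu_1'-m)(M-\mu_1')$. Then $$\mu_2\mu_4-\mu_2^3-\mu_3^2\le \frac{\big((\mu_1'-m)(M-\mu_1')(M-m)\big)^2}{27}\le\frac{(M-m)^6}{432}.$$
   Context: The mean is $\mu_1'=\sum_{i=1}^n p_i x_i$ (discrete case) or $\mu_1'=\int_m^M x f(x)\,dx$ (continuous case), where $\sum p_i=1$, resp. $\int_m^M f(x)\,dx=1$. The $r$-th central moment is $\mu_r=\sum_{i=1}^n p_i (x_i-\mu_1')^r$, resp. $\mu_r=\int_m^M (x-\mu_1')^r f(x)\,dx$. *)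

(* Defs.v *)
From HB Require Import structures.
From mathcomp Require Import all_boot all_order all_algebra.
From mathcomp Require Import all_classical all_reals all_analysis.
Set Implicit Arguments. Unset Strict Implicit. Unset Printing Implicit Defensive.
Import Order.TTheory GRing.Theory Num.Theory.
Local Open Scope ring_scope.
Local Open Scope classical_set_scope.

Definition dmean (R : realType) (n : nat) (p x : 'I_n -> R) : R :=
  \sum_(i < n) p i * x i.

Definition dcmoment (R : realType) (n : nat) (p x : 'I_n -> R) (r : nat) : R :=
  \sum_(i < n) p i * (x i - dmean p x) ^+ r.

Definition cmean (R : realType) (m M : R) (f : R -> R) : R :=
  Rintegral lebesgue_measure `[m, M] (fun x => x * f x).

Definition ccmoment (R : realType) (m M : R) (f : R -> R) (r : nat) : R :=
  Rintegral lebesgue_measure `[m, M] (fun x => (x - cmean m M f) ^+ r * f x).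

Definition is_density_on (R : realType) (m M : R) (f : R -> R) : Prop :=
  [/\ measurable_fun `[m, M] f,
      (forall x, m <= x <= M -> 0 <= f x),
      lebesgue_measure.-integrable `[m, M] (fun x => (f x)%:E)
    & Rintegral lebesgue_measure `[m, M] f = 1].

(* Main.v *)
Require Import Defs.
From HB Require Import structures.
From mathcomp Require Import all_boot all_order all_algebra.
From mathcomp Require Import all_classical all_reals all_analysis.
From mathcomp Require Import measurable_realfun ring lra.
Set Implicit Arguments. Unset Strict Implicit.
Set Implicit Arguments. Unset Strict Implicit.
Import Order.TTheory GRing.Theory Num.Theory.
Local Open Scope ring_scope.
Import numFieldNormedType.Exports.
Local Open Scope classical_set_scope.

Section C.
Variable R : realType.
Notation mu := (@lebesgue_measure R).

Lemma int_contM (m M : R) (f g : R -> R) :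
  mu.-integrable `[m, M] (EFin \o f) -> continuous g ->
  mu.-integrable `[m, M] (EFin \o (fun x => g x * f x)).
Proof.
move=> fi gc.
have mg : measurable_fun `[m, M] g.
  exact: measurable_funTS (continuous_measurable_fun gc).
have bg : [bounded g x | x in `[m, M]].
  have /compact_bounded[B [_ mrt]] := continuous_compact (continuous_subspaceT (A := `[m, M]) gc) (@segment_compact _ m M).
  by exists B; split; rewrite ?num_real // => ? ? ? ?; exact: mrt.
have := integrableMr (mu:=mu) (measurable_itv _) mg bg fi.
apply: eq_integrable => [|x _ /=]; first exact: measurable_itv.
by rewrite EFinM.
Qed.

Lemma contX (c : R) (j : nat) : continuous (fun x : R => (x - c) ^+ j).
Proof.
move=> x.
have h1 : {for x, continuous (fun x : R => x - c)}.
  by apply: cvgB; [exact: cvg_id | exact: cvg_cst].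
have := continuous_comp h1 (@exprn_continuous R j (x - c)).
by [].
Qed.

Lemma step (m M : R) (F G : R -> R) (a : R) :
  mu.-integrable `[m, M] (EFin \o F) -> mu.-integrable `[m, M] (EFin \o G) ->
  mu.-integrable `[m, M] (EFin \o (fun x => F x + a * G x)) /\
  Rintegral mu `[m, M] (fun x => F x + a * G x) =
    Rintegral mu `[m, M] F + a * Rintegral mu `[m, M] G.
Proof.
move=> iF iG.
have iaG : mu.-integrable `[m, M] (EFin \o (fun x => a * G x)).
  have := integrableZl (mu:=mu) (measurable_itv _) a iG.
  by apply: eq_integrable => [|x _ /=]; [exact: measurable_itv | rewrite EFinM].
split.
  have := integrableD (mu:=mu) (measurable_itv _) iF iaG.
  by apply: eq_integrable => [|x _ /=]; [exact: measurable_itv | rewrite EFinD].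
rewrite RintegralD //; first by rewrite RintegralZl.
Qed.

Lemma scal (m M : R) (G : R -> R) (a : R) :
  mu.-integrable `[m, M] (EFin \o G) ->
  mu.-integrable `[m, M] (EFin \o (fun x => a * G x)) /\
  Rintegral mu `[m, M] (fun x => a * G x) = a * Rintegral mu `[m, M] G.
Proof.
move=> iG; split; last by rewrite RintegralZl.
have := integrableZl (mu:=mu) (measurable_itv _) a iG.
by apply: eq_integrable => [|x _ /=]; [exact: measurable_itv | rewrite EFinM].
Qed.

Lemma cont_hyp (m M : R) (f : R -> R) : is_density_on m M f ->
  let mu1 := cmean m M f in
  forall k0 k1 k2 k3 k4 : R, (forall y, m - mu1 <= y <= M - mu1 ->
     0 <= k0 + k1*y + k2*y^+2 + k3*y^+3 + k4*y^+4) ->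
  0 <= k0 + k2 * ccmoment m M f 2 + k3 * ccmoment m M f 3 + k4 * ccmoment m M f 4.
Proof.
case=> mf f0 fi f1 mu1 k0 k1 k2 k3 k4 hP.
pose T j := fun x => (x - mu1) ^+ j * f x.
have iT : forall j, mu.-integrable `[m, M] (EFin \o T j).
  by move=> j; exact: (int_contM fi (contX (c:=mu1) (j:=j))).
have ixf : mu.-integrable `[m, M] (EFin \o (fun x => x * f x)).
  by apply: (int_contM (g := id) fi) => x; exact: cvg_id.
have I0 : Rintegral mu `[m, M] (T 0%N) = 1.
  by rewrite -f1; apply: eq_Rintegral => x _; rewrite /T expr0 mul1r.
have I1 : Rintegral mu `[m, M] (T 1%N) = 0.
  have -> : Rintegral mu `[m, M] (T 1%N) =
     Rintegral mu `[m, M] (fun x => x * f x + (- mu1) * f x).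
    by apply: eq_Rintegral => x _; rewrite /T expr1; ring.
  have [_ ->] := step (-mu1) ixf fi.
  by rewrite f1 mulr1 /mu1 /cmean subrr.
have [i0 e0] := scal k0 (iT 0%N).
have [i1 e1] := step k1 i0 (iT 1%N).
have [i2 e2] := step k2 i1 (iT 2%N).
have [i3 e3] := step k3 i2 (iT 3%N).
have [i4 e4] := step k4 i3 (iT 4%N).
have -> : k0 + k2 * ccmoment m M f 2 + k3 * ccmoment m M f 3 + k4 * ccmoment m M f 4 =
  Rintegral mu `[m, M] (fun x => k0 * T 0%N x + k1 * T 1%N x + k2 * T 2%N x + k3 * T 3%N x + k4 * T 4%N x).
  by rewrite e4 e3 e2 e1 e0 I0 I1 mulr0 addr0 mulr1.
apply: Rintegral_ge0 => x /=; rewrite in_itv /= => /andP[h1 h2].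
have -> : k0 * T 0%N x + k1 * T 1%N x + k2 * T 2%N x + k3 * T 3%N x + k4 * T 4%N x =
  (k0 + k1 * (x - mu1) + k2 * (x - mu1)^+2 + k3 * (x - mu1)^+3 + k4 * (x - mu1)^+4) * f x.
  by rewrite /T; ring.
apply: mulr_ge0; last by apply: f0; rewrite h1 h2.
by apply: hP; rewrite !lerB ?h1 ?h2.
Qed.

Lemma disc_hyp (m M : R) (n : nat) (x p : 'I_n -> R) :
  (forall i, m <= x i <= M) -> (forall i, 0 <= p i) -> \sum_(i < n) p i = 1 ->
  let mu1 := dmean p x in
  forall k0 k1 k2 k3 k4 : R, (forall y, m - mu1 <= y <= M - mu1 ->
     0 <= k0 + k1*y + k2*y^+2 + k3*y^+3 + k4*y^+4) ->
  0 <= k0 + k2 * dcmoment p x 2 + k3 * dcmoment p x 3 + k4 * dcmoment p x 4.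
Proof.
move=> hx hp hs mu1 k0 k1 k2 k3 k4 hP.
have S1 : \sum_(i < n) p i * (x i - mu1) ^+ 1 = 0.
  under eq_bigr do rewrite expr1 mulrBr.
  by rewrite sumrB -mulr_suml hs mul1r subrr.
have -> : k0 + k2 * dcmoment p x 2 + k3 * dcmoment p x 3 + k4 * dcmoment p x 4 =
  \sum_(i < n) p i * (k0 + k1 * (x i - mu1) + k2 * (x i - mu1)^+2 + k3 * (x i - mu1)^+3 + k4 * (x i - mu1)^+4).
  rewrite /dcmoment -/mu1.
  have -> : \sum_(i < n) p i * (k0 + k1 * (x i - mu1) + k2 * (x i - mu1)^+2 + k3 * (x i - mu1)^+3 + k4 * (x i - mu1)^+4)
    = \sum_(i < n) (k0 * p i + k1 * (p i * (x i - mu1)^+1) + k2 * (p i * (x i - mu1)^+2) + k3 * (p i * (x i - mu1)^+3) + k4 * (p i * (x i - mu1)^+4)).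
    by apply: eq_bigr => i _; ring.
  by rewrite !big_split /= -!mulr_sumr hs S1; ring.
apply: sumr_ge0 => i _; apply: mulr_ge0 => //.
by apply: hP; have /andP[h1 h2] := hx i; rewrite !lerB ?h1 ?h2.
Qed.
End C.

Lemma key (R : realFieldType) (m M mu1 s t u : R) : m < M -> s != (mu1 - m) * (M - mu1) ->
 (forall k0 k1 k2 k3 k4 : R, (forall y, m - mu1 <= y <= M - mu1 ->
     0 <= k0 + k1*y + k2*y^+2 + k3*y^+3 + k4*y^+4) -> 0 <= k0 + k2*s + k3*t + k4*u) ->
 s*u - s^+3 - t^+2 <= ((mu1 - m) * (M - mu1) * (M - m))^+2/27
 /\ ((mu1 - m) * (M - mu1) * (M - m))^+2/27 <= (M - m)^+6/432.
Proof.
move=> hmM hs H.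
set a := mu1 - m; set b := M - mu1.
have hMm : M - m = a + b by rewrite /a /b; ring.
rewrite hMm.
set c := a * b; set d := b - a.
have H1 : 0 <= s.
  have h := H 0 0 1 0 0; suff: 0 <= 0 + 1 * s + 0 * t + 0 * u by lra.
  apply: h => y _; have := sqr_ge0 y; lra.
have H2 : 0 <= c - s.
  have h := H c d (-1) 0 0; suff: 0 <= c + -1 * s + 0 * t + 0 * u by lra.
  apply: h => y /andP[h1 h2].
  have hw : 0 <= (y + a) * (b - y) by apply: mulr_ge0; rewrite /a /b in h1 h2 *; lra.
  rewrite /c /d; lra.
have hcs : c - s != 0 by rewrite subr_eq0 eq_sym.
have He : 0 < c - s by rewrite lt_def hcs H2.
set e := c - s.
set l1 := d * s - t.
set l2 := c * s + d * t - u.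
have H3 : 0 <= e * (e * l2 - l1^+2).
  have := H (c * l1^+2) (d * l1^+2 - 2 * c * e * l1) (- l1^+2 - 2 * d * e * l1 + c * e^+2)
              (2 * e * l1 + d * e^+2) (- e^+2).
  have -> : c * l1 ^+ 2 + (- l1 ^+ 2 - 2 * d * e * l1 + c * e ^+ 2) * s +
      (2 * e * l1 + d * e ^+ 2) * t + - e ^+ 2 * u = e * (e * l2 - l1^+2).
    by rewrite /e /l1 /l2; ring.
  apply => y /andP[h1 h2].
  have -> : c * l1 ^+ 2 + (d * l1 ^+ 2 - 2 * c * e * l1) * y +
    (- l1 ^+ 2 - 2 * d * e * l1 + c * e ^+ 2) * y ^+ 2 +
    (2 * e * l1 + d * e ^+ 2) * y ^+ 3 + - e ^+ 2 * y ^+ 4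
     = ((y + a) * (b - y)) * (l1 - e * y)^+2 by rewrite /c /d; ring.
  apply: mulr_ge0; last exact: sqr_ge0.
  by apply: mulr_ge0; rewrite /a /b in h1 h2 *; lra.
have HG : 0 <= e * l2 - l1^+2 by rewrite (pmulr_rge0 _ He) in H3.
have Hc : 0 < c by rewrite /e in He; lra.
have hc0 : c != 0 by rewrite gt_eqF.
split.
  suff: 0 <= e * ((c * (a + b)) ^+ 2 / 27 - (s * u - s ^+ 3 - t ^+ 2)).
    by rewrite pmulr_rge0 // subr_ge0.
  have -> : e * ((c * (a + b)) ^+ 2 / 27 - (s * u - s ^+ 3 - t ^+ 2)) =
     s * (e * l2 - l1^+2) + c * (t - d * s * (c + s) / (2 * c))^+2
     + e * ((a + b)^+2 / (108 * c)) * (3 * s - 2 * c)^+2 * (3 * s + c).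
    rewrite /e /l1 /l2 /c /d; field.
    by move: hc0; rewrite /c mulf_eq0 negb_or => /andP[-> ->].
  apply: addr_ge0; first apply: addr_ge0.
  - exact: mulr_ge0.
  - exact: mulr_ge0 (ltW Hc) (sqr_ge0 _).
  apply: mulr_ge0; last by rewrite /e in He *; lra.
  apply: mulr_ge0; last exact: sqr_ge0.
  apply: mulr_ge0; first exact: ltW.
  by apply: divr_ge0; [exact: sqr_ge0 | apply: ltW; apply: mulr_gt0].
have hq : 0 <= (a + b)^+2 * ((a - b)^+2) * ((a + b)^+2 + 4 * c).
  apply: mulr_ge0; first by apply: mulr_ge0; apply: sqr_ge0.
  have := sqr_ge0 (a + b); lra.
rewrite /c in hq *; lra.
Qed.

Theorem corollary2p3 (R : realType) (m M : R) (hmM : m < M) :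
  (* discrete case *)
  (forall (n : nat) (x p : 'I_n -> R),
     (forall i, m <= x i <= M) ->
     (forall i, 0 <= p i) ->
     \sum_(i < n) p i = 1 ->
     let mu1 := dmean p x in
     let mu2 := dcmoment p x 2 in
     let mu3 := dcmoment p x 3 in
     let mu4 := dcmoment p x 4 in
     mu2 != (mu1 - m) * (M - mu1) ->
     mu2 * mu4 - mu2 ^+ 3 - mu3 ^+ 2
       <= ((mu1 - m) * (M - mu1) * (M - m)) ^+ 2 / 27
     /\ ((mu1 - m) * (M - mu1) * (M - m)) ^+ 2 / 27 <= (M - m) ^+ 6 / 432)
  /\
  (* continuous case *)
  (forall f : R -> R,
     is_density_on m M f ->
     let mu1 := cmean m M f in
     let mu2 := ccmoment m M f 2 in
     let mu3 := ccmoment m M f 3 in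
     let mu4 := ccmoment m M f 4 in
     mu2 != (mu1 - m) * (M - mu1) ->
     mu2 * mu4 - mu2 ^+ 3 - mu3 ^+ 2
       <= ((mu1 - m) * (M - mu1) * (M - m)) ^+ 2 / 27
     /\ ((mu1 - m) * (M - mu1) * (M - m)) ^+ 2 / 27 <= (M - m) ^+ 6 / 432).
Proof.
split.
  move=> n x p hx hp hs mu1 mu2 mu3 mu4 hne.
  exact: (key hmM hne (disc_hyp hx hp hs)).
move=> f hf mu1 mu2 mu3 mu4 hne.
exact: (key hmM hne (cont_hyp hf)).
Qed.
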